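(* Let $n\ge 3$ and $2\le i\le n-1$, and let $\beta\in B_n(D)$ be such that $\pi(\beta)$ is a cycle of length $i+1$. Then the subgroup $H_\beta=\langle P_n(D),\beta\rangle$ of $B_n(D)$ is not bi-orderable.
   Context: $B_n(D)$ is the Artin braid group on $n$ strands, with generators $\sigma_1,\dots,\sigma_{n-1}$ and relations $\sigma_i\sigma_j=\sigma_j\sigma_i$ for $|i-j|\ge 2$ and $\sigma_i\sigma_{i+1}\sigma_i=\sigma_{i+1}\sigma_i\sigma_{i+1}$. The permutation homomorphism $\pi: B_n(D)\to S_n$ is given by $\pi(\sigma_i)=(i,i+1)$, and $P_n(D)=\ker\pi$. $H_\beta=\langle P_n(D),\beta\rangle$ is the subgroup generated by $P_n(D)$ and $\beta$. A group is bi-orderable if it admits a strict total ordering invariant under both left and right multiplication. *)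

(* Defs.v *)
(* Braid group B_n(D) modelled by its standard presentation:
   words in the letters sigma_{k+1}^{+-1} (k : 'I_(n.-1)) modulo the congruence
   generated by free cancellation and the Artin relations. *)
From mathcomp Require Import all_boot all_fingroup.
Set Implicit Arguments. Unset Strict Implicit. Unset Printing Implicit Defensive.

(* letter (k, b) : sigma_{k+1} if b = true, sigma_{k+1}^{-1} if b = false *)
Definition letter (n : nat) := ('I_n.-1 * bool)%type.
Definition word (n : nat) := seq (letter n).

Definition winv n (w : word n) : word n := rev (map (fun l => (l.1, ~~ l.2)) w).

Inductive braid_rel n : word n -> word n -> Prop :=
| br_cancel (k : 'I_n.-1) (b : bool) : braid_rel [:: (k, b); (k, ~~ b)] [::]
| br_comm (j k : 'I_n.-1) : (j.+2 <= k)%N ->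
    braid_rel [:: (j, true); (k, true)] [:: (k, true); (j, true)]
| br_braid (j k : 'I_n.-1) : k = j.+1 :> nat ->
    braid_rel [:: (j, true); (k, true); (j, true)] [:: (k, true); (j, true); (k, true)].

Inductive beq n : word n -> word n -> Prop :=
| beq_refl w : beq w w
| beq_sym u v : beq u v -> beq v u
| beq_trans u v w : beq u v -> beq v w -> beq u w
| beq_step (u v r s : word n) : braid_rel r s -> beq (u ++ r ++ v) (u ++ s ++ v).

Definition stau (n k : nat) : 'S_n :=
  match (k.+1 < n) =P true with
  | ReflectT h => tperm (Ordinal (ltnW h)) (Ordinal h)
  | ReflectF _ => 1%g
  end.

Definition braid_perm n (w : word n) : 'S_n :=
  (\prod_(l <- w) stau n (nat_of_ord l.1))%g.

Definition pure n (w : word n) : Prop := braid_perm w = 1%g.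

Definition is_cycle_of_length n (s : 'S_n) (m : nat) : Prop :=
  exists x : 'I_n, #|porbit s x| = m /\ forall y, y \notin porbit s x -> s y = y.

Inductive H_beta n (beta : word n) : word n -> Prop :=
| H_pure w : pure w -> H_beta beta w
| H_gen : H_beta beta beta
| H_mul u v : H_beta beta u -> H_beta beta v -> H_beta beta (u ++ v)
| H_inv u : H_beta beta u -> H_beta beta (winv u)
| H_beq u v : beq u v -> H_beta beta u -> H_beta beta v.

Definition biorderable n (H : word n -> Prop) : Prop :=
  exists lt : word n -> word n -> Prop,
    (forall a a' b b', beq a a' -> beq b b' -> lt a b -> lt a' b') /\
    (forall a, H a -> ~ lt a a) /\
    (forall a b c, H a -> H b -> H c -> lt a b -> lt b c -> lt a c) /\
    (forall a b, H a -> H b -> beq a b \/ lt a b \/ lt b a) /\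
    (forall a b c, H a -> H b -> H c -> lt a b -> lt (c ++ a) (c ++ b)) /\
    (forall a b c, H a -> H b -> H c -> lt a b -> lt (a ++ c) (b ++ c)).

(* Main.v *)
Require Import Defs.
From Stdlib Require Import ZArith Lia Setoid Morphisms.
From mathcomp Require Import all_boot all_fingroup zify.

Definition swp (k x : nat) : nat := if x == k then k.+1 else if x == k.+1 then k else x.
Definition hitN (k P Q : nat) : bool := ((P == k) && (Q == k.+1)) || ((P == k.+1) && (Q == k)).
Lemma jeqs j : ((j.+1 == j) = false) * ((j == j.+1) = false) * ((j.+2 == j) = false) *
  ((j == j.+2) = false) * ((j.+2 == j.+1) = false) * ((j.+1 == j.+2) = false).
Proof. repeat split; lia. Qed.
Lemma swp_oth k x : x != k -> x != k.+1 -> swp k x = x.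
Proof. by rewrite /swp => /negbTE -> /negbTE ->. Qed.
Lemma hitN_oth k P Q : P != k -> P != k.+1 -> hitN k P Q = false.
Proof. by rewrite /hitN => /negbTE -> /negbTE ->. Qed.
Lemma hitN_oth2 k P Q : Q != k -> Q != k.+1 -> hitN k P Q = false.
Proof. by rewrite /hitN => /negbTE -> /negbTE ->; rewrite !andbF. Qed.
Lemma cases3 j P : [\/ P = j, P = j.+1, P = j.+2 | [/\ P != j, P != j.+1 & P != j.+2]].
Proof. have [->|?] := eqVneq P j; first by constructor. have [->|?] := eqVneq P j.+1; first by constructor.
have [->|?] := eqVneq P j.+2; first by constructor. by constructor 4. Qed.
Lemma braidN j P Q :
  (Z.b2z (hitN j P Q) + Z.b2z (hitN j.+1 (swp j P) (swp j Q)) + Z.b2z (hitN j (swp j.+1 (swp j P)) (swp j.+1 (swp j Q))) =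
  Z.b2z (hitN j.+1 P Q) + Z.b2z (hitN j (swp j.+1 P) (swp j.+1 Q)) + Z.b2z (hitN j.+1 (swp j (swp j.+1 P)) (swp j (swp j.+1 Q))))%Z.
Proof.
case: (cases3 j P) => [->|->|->|[h1 h2 h3]]; last first.
  by rewrite !(swp_oth _ _ h1 h2, swp_oth _ _ h2 h3, hitN_oth _ _ _ h1 h2, hitN_oth _ _ _ h2 h3).
all: case: (cases3 j Q) => [->|->|->|[h1 h2 h3]]; last first.
all: try (by rewrite !(swp_oth _ _ h1 h2, swp_oth _ _ h2 h3, hitN_oth2 _ _ _ h1 h2, hitN_oth2 _ _ _ h2 h3)).
all: rewrite /swp /hitN !eqxx !jeqs /= ?eqxx ?jeqs //=.
Qed.
Lemma swp_far j k x : (j.+2 <= k) || (k.+2 <= j) ->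
  ((swp k x == j) = (x == j)) * ((swp k x == j.+1) = (x == j.+1)).
Proof. move=> h; rewrite /swp; split; repeat case: eqP; lia. Qed.
Lemma hitN_far j k P Q : (j.+2 <= k) || (k.+2 <= j) -> hitN j (swp k P) (swp k Q) = hitN j P Q.
Proof. by move=> h; rewrite /hitN !(swp_far _ _ _ h). Qed.
Lemma hitN_same k P Q : hitN k (swp k P) (swp k Q) = hitN k P Q.
Proof. rewrite /hitN /swp; repeat case: eqP; lia. Qed.
Lemma swpK k x : swp k (swp k x) = x.
Proof. rewrite /swp; repeat case: eqP; lia. Qed.

Lemma swp_braid j x : swp j (swp j.+1 (swp j x)) = swp j.+1 (swp j (swp j.+1 x)).
Proof.
case: (cases3 j x) => [->|->|->|[h1 h2 h3]].
- by rewrite /swp !eqxx !jeqs /= ?eqxx ?jeqs.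
- by rewrite /swp !eqxx !jeqs /= ?eqxx ?jeqs.
- by rewrite /swp !eqxx !jeqs /= ?eqxx ?jeqs.
- by rewrite !(swp_oth _ _ h1 h2, swp_oth _ _ h2 h3).
Qed.
Lemma swp_comm j k x : j.+2 <= k -> swp k (swp j x) = swp j (swp k x).
Proof. rewrite /swp => h. Time repeat case: eqP; lia. Qed.

Set Implicit Arguments. Unset Strict Implicit. Unset Printing Implicit Defensive.

Lemma beq_catl n (w u v : word n) : beq u v -> beq (w ++ u) (w ++ v).
Proof.
elim=> {u v} [u|u v _ IH|u v x _ IH1 _ IH2|u v r s H].
- exact: beq_refl.
- exact: beq_sym.
- exact: beq_trans IH2.
- by rewrite !catA -!(catA (w ++ u)); apply: beq_step.
Qed.

Lemma beq_catr n (w u v : word n) : beq u v -> beq (u ++ w) (v ++ w).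
Proof.
elim=> {u v} [u|u v _ IH|u v x _ IH1 _ IH2|u v r s H].
- exact: beq_refl.
- exact: beq_sym.
- exact: beq_trans IH2.
- by rewrite -!catA; apply: beq_step.
Qed.

#[global] Instance beq_Equiv n : Equivalence (@beq n).
Proof. split; [exact: beq_refl | exact: beq_sym | exact: beq_trans]. Qed.

#[global] Instance cat_Proper n : Proper (@beq n ==> @beq n ==> @beq n) cat.
Proof.
move=> u u' Hu v v' Hv; apply: beq_trans (beq_catr _ Hu); exact: beq_catl.
Qed.

Lemma winv_cat n (u v : word n) : winv (u ++ v) = winv v ++ winv u.
Proof. by rewrite /winv map_cat rev_cat. Qed.

Lemma winvK n (u : word n) : winv (winv u) = u.
Proof.
rewrite /winv map_rev revK -map_comp map_id_in //.
by case=> a b _ /=; rewrite negbK.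
Qed.

Lemma winv_cons n (l : letter n) u : winv (l :: u) = winv u ++ [:: (l.1, ~~ l.2)].
Proof. by rewrite /winv /= rev_cons cats1. Qed.

Lemma beq_winvr n (u : word n) : beq (u ++ winv u) [::].
Proof.
elim: u => [|[k b] u IH] //=; first exact: beq_refl.
rewrite winv_cons /= catA.
transitivity ([:: (k, b)] ++ [::] ++ [:: (k, ~~ b)]).
  change ((k, b) :: ((u ++ winv u) ++ [:: (k, ~~ b)])) with ([:: (k, b)] ++ ((u ++ winv u) ++ [:: (k, ~~ b)])).
  apply: beq_catl; exact: beq_catr.
exact: (beq_step [::] [::] (br_cancel k b)).
Qed.

Lemma beq_winvl n (u : word n) : beq (winv u ++ u) [::].
Proof. by have := beq_winvr (winv u); rewrite winvK. Qed.


Lemma stau_val n k (x : 'I_n) : k.+1 < n -> val (stau n k x) = swp k x.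
Proof.
rewrite /stau; case: eqP => // h _.
case: tpermP => [->|->|h1 h2] /=; rewrite /swp ?eqxx.
- done.
- by rewrite (_ : (k.+1 == k) = false) //; lia.
- have e1 : (val x == k) = false by apply/eqP => e; apply: h1; apply: val_inj.
  have e2 : (val x == k.+1) = false by apply/eqP => e; apply: h2; apply: val_inj.
  by rewrite e1 e2.
Qed.

Lemma letter_lt n (l : 'I_n.-1) : (val l).+1 < n.
Proof. case: n l => [|n] [l hl] //=. Qed.

Lemma stauK n k : (stau n k * stau n k = 1)%g.
Proof. rewrite /stau; case: eqP => h; [exact: tperm2 | exact: mulg1]. Qed.

Lemma braid_perm_cat n (u v : word n) : braid_perm (u ++ v) = (braid_perm u * braid_perm v)%g.
Proof. by rewrite /braid_perm big_cat. Qed.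

Lemma braid_perm_cons n (l : letter n) (u : word n) : braid_perm (l :: u) = (stau n l.1 * braid_perm u)%g.
Proof. by rewrite /braid_perm big_cons. Qed.

Lemma braid_perm_nil n : braid_perm ([::] : word n) = 1%g.
Proof. by rewrite /braid_perm big_nil. Qed.

Lemma braid_perm_winv n (u : word n) : braid_perm (winv u) = (braid_perm u)^-1%g.
Proof.
elim: u => [|l u IH]; first by rewrite /winv /= braid_perm_nil invg1.
rewrite winv_cons braid_perm_cat IH braid_perm_cons invMg; congr (_ * _)%g.
rewrite braid_perm_cons braid_perm_nil mulg1 /=.
by apply: (mulgI (stau n l.1)); rewrite stauK mulgV.
Qed.

Fixpoint cnt n (a b : 'I_n) (p : {perm 'I_n}) (w : word n) : Z :=
  match w with
  | [::] => 0%Z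
  | l :: w' => ((if l.2 then Z.b2z (hitN l.1 (p a) (p b)) else - Z.b2z (hitN l.1 (p a) (p b)))
                 + cnt a b (p * stau n l.1)%g w')%Z
  end.

Lemma cnt_cat n (a b : 'I_n) p (u v : word n) :
  cnt a b p (u ++ v) = (cnt a b p u + cnt a b (p * braid_perm u)%g v)%Z.
Proof.
elim: u p => [|l u IH] p /=; first by rewrite braid_perm_nil mulg1.
by rewrite IH braid_perm_cons mulgA Z.add_assoc.
Qed.

Lemma mulstau n (p : {perm 'I_n}) (l : 'I_n.-1) x :
  val ((p * stau n l)%g x) = swp l (p x).
Proof. by rewrite permM stau_val // letter_lt. Qed.

Lemma rel_inv n (a b : 'I_n) (r s : word n) : braid_rel r s ->
  (forall p, cnt a b p r = cnt a b p s) /\ braid_perm r = braid_perm s.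
Proof.
case=> [k c|j k hjk|j k hjk]; split.
- by move=> p /=; rewrite !mulstau hitN_same; case: hitN; case: c.
- by rewrite !braid_perm_cons braid_perm_nil mulg1 stauK.
- move=> p /=; rewrite !mulstau hitN_far ?hitN_far; [by rewrite !Z.add_0_r Z.add_comm | by rewrite hjk | by rewrite hjk orbT].
- rewrite !braid_perm_cons braid_perm_nil !mulg1; apply/permP => x; apply: val_inj.
  by rewrite !permM !stau_val ?letter_lt // (swp_comm _ _ _ hjk).
- move=> p /=; rewrite !mulstau hjk !Z.add_0_r !Z.add_assoc; exact: braidN.
- rewrite !braid_perm_cons braid_perm_nil !mulg1; apply/permP => x; apply: val_inj.
  by rewrite !permM !stau_val ?letter_lt // /= hjk swp_braid.
Qed.

Lemma beq_inv n (a b : 'I_n) (u v : word n) : beq u v ->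
  (forall p, cnt a b p u = cnt a b p v) /\ braid_perm u = braid_perm v.
Proof.
elim=> {u v} [u|u v _ [IH1 IH2]|u v w _ [IH1 IH2] _ [IH3 IH4]|u v r s H].
- by [].
- by split.
- by split; [move=> p; rewrite IH1 IH3 | rewrite IH2 IH4].
- have [H1 H2] := rel_inv a b H.
  split; last by rewrite !braid_perm_cat H2.
  by move=> p; rewrite !cnt_cat H1 H2.
Qed.


Fixpoint pw n (w : word n) k : word n := if k is k'.+1 then pw w k' ++ w else [::].

Lemma H_nil n (beta : word n) : H_beta beta [::].
Proof. by apply: H_pure; rewrite /pure braid_perm_nil. Qed.

Lemma H_pw n (beta w : word n) k : H_beta beta w -> H_beta beta (pw w k).
Proof. move=> h; elim: k => [|k IH] /=; [exact: H_nil | exact: H_mul]. Qed.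

Lemma pw_conj n (x y : word n) k : beq (pw (y ++ x ++ winv y) k) (y ++ pw x k ++ winv y).
Proof.
elim: k => [|k IH] /=; first by symmetry; exact: beq_winvr.
apply: beq_trans (beq_catr _ IH) _.
have -> : (y ++ pw x k ++ winv y) ++ y ++ x ++ winv y = (y ++ pw x k) ++ (winv y ++ y) ++ (x ++ winv y).
  by rewrite !catA.
have -> : y ++ (pw x k ++ x) ++ winv y = (y ++ pw x k) ++ [::] ++ (x ++ winv y).
  by rewrite /= !catA.
apply: beq_catl; apply: beq_catr; exact: beq_winvl.
Qed.


Lemma lt_pw n (H : word n -> Prop) (lt : word n -> word n -> Prop)
  (Hcomp : forall a a' b b', beq a a' -> beq b b' -> lt a b -> lt a' b')
  (Htr : forall a b c, H a -> H b -> H c -> lt a b -> lt b c -> lt a c)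
  (Hl : forall a b c, H a -> H b -> H c -> lt a b -> lt (c ++ a) (c ++ b))
  (Hr : forall a b c, H a -> H b -> H c -> lt a b -> lt (a ++ c) (b ++ c))
  (Hpw : forall w k, H w -> H (pw w k)) (Hmul : forall u v, H u -> H v -> H (u ++ v))
  a b k : H a -> H b -> lt a b -> lt (pw a k.+1) (pw b k.+1).
Proof.
move=> ha hb hab; elim: k => [|k IH] /=; first exact: hab.
have hA := Hpw a k.+1 ha; have hB := Hpw b k.+1 hb.
apply: (Htr _ (pw a k.+1 ++ b)).
- exact: (Hmul _ _ hA ha).
- exact: (Hmul _ _ hA hb).
- exact: (Hmul _ _ hB hb).
- exact: (Hl _ _ _ ha hb hA hab).
- exact: (Hr _ _ _ hA hB hb IH).
Qed.

Lemma bo_comm n (beta : word n) (lt : word n -> word n -> Prop)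
  (Hcomp : forall a a' b b', beq a a' -> beq b b' -> lt a b -> lt a' b')
  (Hirr : forall a, H_beta beta a -> ~ lt a a)
  (Htr : forall a b c, H_beta beta a -> H_beta beta b -> H_beta beta c -> lt a b -> lt b c -> lt a c)
  (Htot : forall a b, H_beta beta a -> H_beta beta b -> beq a b \/ lt a b \/ lt b a)
  (Hl : forall a b c, H_beta beta a -> H_beta beta b -> H_beta beta c -> lt a b -> lt (c ++ a) (c ++ b))
  (Hr : forall a b c, H_beta beta a -> H_beta beta b -> H_beta beta c -> lt a b -> lt (a ++ c) (b ++ c))
  x y k : H_beta beta x -> H_beta beta y ->
  beq (pw x k.+1 ++ y) (y ++ pw x k.+1) -> beq (x ++ y) (y ++ x).
Proof.
move=> hx hy hc.
have hz : H_beta beta (y ++ x ++ winv y) by apply: H_mul => //; apply: H_mul => //; exact: H_inv.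
have ez : beq (pw (y ++ x ++ winv y) k.+1) (pw x k.+1).
  apply: beq_trans (pw_conj _ _ _) _.
  rewrite catA; apply: beq_trans (beq_catr _ (beq_sym hc)) _.
  rewrite -catA -[X in beq _ X]cats0; apply: beq_catl; exact: beq_winvr.
have Hpw' := @H_pw n beta.
have Hmul' := @H_mul n beta.
have hpx := Hpw' x k.+1 hx.
case: (Htot _ _ hz hx) => [e|[h|h]].
- apply: beq_trans (_ : beq _ ((y ++ x ++ winv y) ++ y)) _.
    by apply: beq_catr; exact: beq_sym.
  rewrite -!catA; apply: beq_catl.
  rewrite -[X in beq _ X]cats0; apply: beq_catl; exact: beq_winvl.
- exfalso; apply: (Hirr _ hpx).
  apply: (Hcomp _ _ _ _ ez (beq_refl _)).
  exact: (lt_pw Hcomp Htr Hl Hr Hpw' Hmul' k hz hx h).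
- exfalso; apply: (Hirr _ hpx).
  apply: (Hcomp _ _ _ _ (beq_refl _) ez).
  exact: (lt_pw Hcomp Htr Hl Hr Hpw' Hmul' k hx hz h).
Qed.


Definition sg K (j : nat) : letter K.+2 := (inord j : 'I_K.+1, true).
Definition Dw K (i : nat) : word K.+2 := [seq sg K j | j <- iota 0 i].

Lemma sg_val K j : j <= K -> val (sg K j).1 = j.
Proof. by move=> h; rewrite /= inordK. Qed.

Lemma sg_comm K j k : j <= K -> k <= K -> j.+2 <= k -> beq [:: sg K j; sg K k] [:: sg K k; sg K j].
Proof.
move=> hj hk h.
have := beq_step [::] [::] (@br_comm K.+2 (inord j) (inord k) _); apply.
by rewrite !inordK.
Qed.

Lemma sg_comm2 K j k : j <= K -> k <= K -> (j.+2 <= k) || (k.+2 <= j) ->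
  beq [:: sg K j; sg K k] [:: sg K k; sg K j].
Proof.
move=> hj hk /orP[h|h]; first exact: sg_comm.
symmetry; exact: sg_comm.
Qed.

Lemma sg_braid K j : j < K -> beq [:: sg K j; sg K j.+1; sg K j] [:: sg K j.+1; sg K j; sg K j.+1].
Proof.
move=> hj.
have := beq_step [::] [::] (@br_braid K.+2 (inord j) (inord j.+1) _); apply.
rewrite !inordK //; lia.
Qed.

Lemma comm_word K j (L : seq nat) : j <= K ->
  (forall e, e \in L -> (e <= K) && ((j.+2 <= e) || (e.+2 <= j))) ->
  beq ([seq sg K e | e <- L] ++ [:: sg K j]) (sg K j :: [seq sg K e | e <- L]).
Proof.
move=> hj; elim: L => [|e L IH] hL /=; first exact: beq_refl.
have /andP[he hf] := hL e (mem_head _ _).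
have IH' := IH (fun e' h => hL e' (@mem_behead _ (e :: L) _ h)).
apply: beq_trans (_ : beq _ (sg K e :: sg K j :: [seq sg K e | e <- L])) _.
  exact: (beq_catl [:: sg K e] IH').
have := beq_catr [seq sg K e | e <- L] (sg_comm2 he hj (_ : (e.+2 <= j) || (j.+2 <= e))); rewrite orbC; apply; exact: hf.
Qed.

Lemma D_shift K i j : i <= K.+1 -> j.+1 < i -> beq (Dw K i ++ [:: sg K j]) (sg K j.+1 :: Dw K i).
Proof.
move=> hi hji.
have ei : i = j + (2 + (i - j.+2)) by lia.
rewrite /Dw ei iotaD iotaD /= add0n.
set A := [seq sg K e | e <- iota 0 j].
set B := [seq sg K e | e <- iota (j + 2) (i - j.+2)].
rewrite map_cat /= -!catA /=.
have hB : beq (B ++ [:: sg K j]) (sg K j :: B).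
  apply: comm_word; first lia.
  move=> e; rewrite mem_iota => /andP[h1 h2]; apply/andP; split; lia.
have hA : beq (A ++ [:: sg K j.+1]) (sg K j.+1 :: A).
  apply: comm_word; first lia.
  move=> e; rewrite mem_iota => /andP[h1 h2]; apply/andP; split; lia.
apply: beq_trans (_ : beq _ (A ++ [:: sg K j; sg K j.+1; sg K j] ++ B)) _.
  apply: beq_catl; exact: (beq_catl [:: sg K j; sg K j.+1] hB).
apply: beq_trans (_ : beq _ (A ++ [:: sg K j.+1; sg K j; sg K j.+1] ++ B)) _.
  apply: beq_catl; apply: beq_catr; apply: sg_braid; lia.
have := beq_catr ([:: sg K j; sg K j.+1] ++ B) hA; by rewrite -!catA.
Qed.

Lemma Dpow_shift K i t j : i <= K.+1 -> j + t < i ->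
  beq (pw (Dw K i) t ++ [:: sg K j]) (sg K (j + t) :: pw (Dw K i) t).
Proof.
move=> hi; elim: t j => [|t IH] j h /=; first by rewrite addn0; exact: beq_refl.
rewrite -catA.
apply: beq_trans (_ : beq _ (pw (Dw K i) t ++ (sg K j.+1 :: Dw K i))) _.
  apply: beq_catl; apply: D_shift => //; lia.
have := beq_catr (Dw K i) (IH j.+1 (_ : j.+1 + t < i)).
rewrite -catA addSnnS /=; apply; lia.
Qed.

Lemma Dw_S K t : Dw K t.+1 = Dw K t ++ [:: sg K t].
Proof. by rewrite /Dw (_ : t.+1 = t + 1) ?iotaD ?map_cat // addn1. Qed.

Lemma Q_lem K i t : i <= K.+1 -> t < i ->
  beq (pw (sg K 0 :: Dw K i) t ++ [:: sg K 0]) (Dw K t.+1 ++ pw (Dw K i) t).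
Proof.
move=> hi; elim: t => [|t IH] h; first exact: beq_refl.
have IH' := IH (ltnW h).
have -> : pw (sg K 0 :: Dw K i) t.+1 ++ [:: sg K 0]
  = (pw (sg K 0 :: Dw K i) t ++ [:: sg K 0]) ++ (Dw K i ++ [:: sg K 0]) by rewrite -!catA.
apply: beq_trans (beq_catr _ IH') _.
have -> : (Dw K t.+1 ++ pw (Dw K i) t) ++ Dw K i ++ [:: sg K 0]
   = Dw K t.+1 ++ (pw (Dw K i) t.+1 ++ [:: sg K 0]) by rewrite /= !catA.
apply: beq_trans (_ : beq _ (Dw K t.+1 ++ (sg K t.+1 :: pw (Dw K i) t.+1))) _.
  apply: beq_catl; have := @Dpow_shift K i t.+1 0 hi; rewrite add0n; apply; lia.
rewrite (Dw_S K t.+1) -catA; exact: beq_refl.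
Qed.

Lemma pw_consw n (a : word n) t : a ++ pw a t = pw a t ++ a.
Proof. elim: t => [|t IH] /=; first by rewrite cats0. by rewrite catA IH. Qed.

Lemma pw_rot n (a b : word n) t : a ++ pw (b ++ a) t = pw (a ++ b) t ++ a.
Proof. elim: t => [|t IH] /=; first by rewrite cats0. by rewrite !catA IH -!catA. Qed.

Lemma Dm_comm K i : 0 < i -> i <= K.+1 ->
  beq ([:: sg K 0] ++ pw (Dw K i) i.+1) (pw (Dw K i) i.+1 ++ [:: sg K 0]).
Proof.
move=> h0 hi; set D := Dw K i.
have [t et] : exists t, i = t.+1 by exists i.-1; lia.
have hQ : beq (pw (sg K 0 :: D) t ++ [:: sg K 0]) (D ++ pw D t).
  have := @Q_lem K i t hi; rewrite -et; apply; lia.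
have e1 : beq (pw D i.+1) (pw ([:: sg K 0] ++ D) i).
  have -> : pw D i.+1 = (D ++ pw D t) ++ D by rewrite et /= pw_consw.
  have -> : pw ([:: sg K 0] ++ D) i = (pw (sg K 0 :: D) t ++ [:: sg K 0]) ++ D by rewrite et /= -catA.
  exact: beq_catr (beq_sym hQ).
have e2 : beq (pw D i.+1) (pw (D ++ [:: sg K 0]) i).
  have -> : pw D i.+1 = D ++ (D ++ pw D t).
    rewrite et; transitivity (D ++ pw D t.+1); first by rewrite pw_consw.
    by rewrite /= -pw_consw.
  have -> : pw (D ++ [:: sg K 0]) i = D ++ (pw (sg K 0 :: D) t ++ [:: sg K 0]).
    by rewrite et catA (pw_rot D [:: sg K 0]) /= -!catA.
  exact: beq_catl (beq_sym hQ).
apply: beq_trans (beq_catl _ e2) _.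
rewrite pw_rot; apply: beq_catr; exact: beq_sym.
Qed.


Definition cyc (i x : nat) : nat := if x == 0 then i else if x <= i then x.-1 else x.

Lemma cyc_step i x : swp i (cyc i x) = cyc i.+1 x.
Proof.
rewrite /cyc; case: eqP => [_|h0]; first by rewrite /swp eqxx.
case: (ltngtP x i.+1) => h.
- rewrite (_ : x <= i) ?(_ : x <= i.+1) //; try lia.
  rewrite swp_oth //; apply/eqP; lia.
- rewrite (_ : x <= i = false) ?(_ : x <= i.+1 = false) //; try lia.
  rewrite swp_oth //; apply/eqP; lia.
- subst x; rewrite (_ : i.+1 <= i = false) ?leqnn //; last lia.
  by rewrite /swp eqxx (_ : (i.+1 == i) = false) //; lia.
Qed.

Lemma bp_Dw K i (x : 'I_K.+2) : i <= K.+1 -> val (braid_perm (Dw K i) x) = cyc i x.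
Proof.
elim: i => [|i IH] hi.
  by rewrite /Dw /= braid_perm_nil perm1 /cyc; case: (nat_of_ord x).
rewrite Dw_S braid_perm_cat braid_perm_cons braid_perm_nil mulg1 permM stau_val; last first.
  by rewrite sg_val; lia.
by rewrite sg_val ?IH ?cyc_step //; lia.
Qed.

Lemma stau_tperm n (a b : 'I_n) : nat_of_ord b = (nat_of_ord a).+1 -> stau n a = tperm a b.
Proof.
move=> hb; rewrite /stau; case: eqP => [h|h]; last by exfalso; apply: h; rewrite -hb ltn_ord.
by congr tperm; apply: val_inj.
Qed.

Definition realz n (s : {perm 'I_n}) := exists w : word n, braid_perm w = s.

Lemma realz_mul n (s t : {perm 'I_n}) : realz s -> realz t -> realz (s * t)%g.
Proof. by case=> u <- [v <-]; exists (u ++ v); rewrite braid_perm_cat. Qed.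

Lemma realz1 n : realz (1%g : {perm 'I_n}).
Proof. by exists [::]; rewrite braid_perm_nil. Qed.

Lemma realz_adj n (a b : 'I_n) : nat_of_ord b = (nat_of_ord a).+1 -> realz (tperm a b).
Proof.
move=> hb.
have ha : nat_of_ord a < n.-1 by have := ltn_ord b; rewrite -subn1; lia.
exists [:: (Ordinal ha, true)]; rewrite braid_perm_cons braid_perm_nil mulg1 /=.
exact: stau_tperm.
Qed.

Lemma realz_tperm_lt n d (a b : 'I_n) : nat_of_ord b = nat_of_ord a + d.+1 -> realz (tperm a b).
Proof.
elim: d a b => [|d IH] a b hb; first by apply: realz_adj; lia.
have hc : (nat_of_ord a + d.+1) < n by have := ltn_ord b; lia.
pose c := Ordinal hc.
have [w hw] := IH a c erefl.
have ->: tperm a b = (tperm c b * tperm a c * tperm c b)%g.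
  have e : tperm a b = (tperm a c ^ tperm c b)%g.
    rewrite tpermJ tpermL tpermD //; apply/eqP => e; have := congr1 (@nat_of_ord n) e => /=; lia.
  by rewrite e /conjg tpermV mulgA.
apply: realz_mul; first apply: realz_mul.
- apply: realz_adj => /=; lia.
- by exists w.
- apply: realz_adj => /=; lia.
Qed.

Lemma realz_tperm n (a b : 'I_n) : realz (tperm a b).
Proof.
case: (ltngtP (nat_of_ord a) (nat_of_ord b)) => h.
- apply: (@realz_tperm_lt n (nat_of_ord b - nat_of_ord a).-1); lia.
- rewrite tpermC; apply: (@realz_tperm_lt n (nat_of_ord a - nat_of_ord b).-1); lia.
- have -> : a = b by apply: val_inj.
  rewrite tperm1; exact: realz1.
Qed.

Lemma realz_all n (s : {perm 'I_n}) : realz s.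
Proof.
have [ts -> _] := prod_tpermP s.
elim: ts => [|t ts IH]; first by rewrite big_nil; exact: realz1.
by rewrite big_cons; apply: realz_mul => //; exact: realz_tperm.
Qed.

Lemma conj_cycle n i (tau t0 : {perm 'I_n}) (x0 : 'I_n) :
  #|porbit tau x0| = i.+1 -> (forall y, y \notin porbit tau x0 -> tau y = y) ->
  (forall w : 'I_n, nat_of_ord (t0 w) = cyc i w) ->
  exists c : {perm 'I_n}, (c^-1 * t0 * c)%g = tau.
Proof.
move=> hcard hfix ht0.
set rho := (tau^-1)%g.
have hO : #|porbit rho x0| = i.+1 by rewrite porbitV.
set O := porbit tau x0.
set L := traject rho x0 i.+1 ++ enum (~: O).
have hsz : size L = n.
  by rewrite size_cat size_traject -cardE; have := cardsC O; rewrite card_ord /O hcard.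
have hu : uniq L.
  rewrite cat_uniq enum_uniq andbT; apply/andP; split.
    by have := uniq_traject_porbit rho x0; rewrite hO.
  apply/hasPn => y; rewrite mem_enum in_setC => hy; apply/negP => ht.
  move: hy; rewrite /O -porbitV porbit_traject hO ht.
  done.
have hinj : injective (fun w : 'I_n => nth x0 L w).
  by move=> u v /eqP; rewrite nth_uniq ?hsz // => /eqP; apply: val_inj.
set c := perm hinj.
have key : forall w, c (t0 w) = tau (c w).
  move=> w; rewrite !permE.
  case: (ltnP w i.+1) => hw.
  - have ht : t0 w < i.+1.
      rewrite ht0 /cyc; case: eqP => _ //; case: (leqP w i) => h.
      + by rewrite ltnS; exact: leq_trans (leq_pred _) h.
      + exact: hw.
    rewrite !nth_cat size_traject hw ht !nth_traject // ht0 /cyc.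
    case: eqP => [e|ne].
    + rewrite e /=.
      apply: (@perm_inj _ rho).
      by rewrite -iterS -hO iter_porbit /rho permK.
    + rewrite (_ : w <= i) //.
      have [k ek] : exists k, nat_of_ord w = k.+1 by exists w.-1; lia.
      by rewrite ek /= permKV.
  - have e : t0 w = w by apply: val_inj; rewrite /= ht0 /cyc; case: eqP; [lia|]; case: leqP; lia.
    rewrite e nth_cat size_traject ltnNge hw /=.
    rewrite hfix //.
    have : nth x0 (enum (~: O)) (w - i.+1) \in enum (~: O).
      apply: mem_nth; rewrite -cardE; have := cardsC O; rewrite card_ord /O hcard.
      have := ltn_ord w; move: hw; set m := #|~: porbit tau x0|; clear; lia.
    by rewrite mem_enum in_setC.
exists c; apply/permP => z.
by rewrite !permM key permKV.
Qed.


Lemma bp_ss n (l : letter n) : braid_perm [:: l; l] = 1%g.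
Proof. by rewrite !braid_perm_cons braid_perm_nil mulg1 stauK. Qed.

Lemma cnt_ss n (a b : 'I_n) p (k : 'I_n.-1) :
  cnt a b p [:: (k, true); (k, true)] = (2 * Z.b2z (hitN k (p a) (p b)))%Z.
Proof. by rewrite /= !mulstau hitN_same; case: hitN. Qed.

Lemma cnt_11 n (a b : 'I_n) w : cnt a b (1 * 1)%g w = cnt a b 1 w.
Proof. by rewrite mulg1. Qed.

Lemma conj_cat n (C U V : word n) :
  beq ((winv C ++ U ++ C) ++ (winv C ++ V ++ C)) (winv C ++ (U ++ V) ++ C).
Proof.
have -> : (winv C ++ U ++ C) ++ (winv C ++ V ++ C) = (winv C ++ U) ++ (C ++ winv C) ++ (V ++ C)
  by rewrite -!catA.
have -> : winv C ++ (U ++ V) ++ C = (winv C ++ U) ++ [::] ++ (V ++ C) by rewrite /= -!catA.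
apply: beq_catl; apply: beq_catr; exact: beq_winvr.
Qed.

Lemma conj_beq n (C U V : word n) : beq U V -> beq (winv C ++ U ++ C) (winv C ++ V ++ C).
Proof. by move=> h; apply: beq_catl; apply: beq_catr. Qed.

Lemma unconj n (C U : word n) : beq (C ++ (winv C ++ U ++ C) ++ winv C) U.
Proof.
have -> : C ++ (winv C ++ U ++ C) ++ winv C = (C ++ winv C) ++ U ++ (C ++ winv C) by rewrite -!catA.
apply: beq_trans (_ : beq _ ([::] ++ U ++ [::])) _; last by rewrite cats0; exact: beq_refl.
apply: beq_trans (beq_catr _ (beq_winvr C)) _.
apply: beq_catl; apply: beq_catl; exact: beq_winvr.
Qed.

Theorem mainTheorem12 (n i : nat) (beta : word n) :
  (3 <= n)%N -> (2 <= i <= n - 1)%N ->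
  is_cycle_of_length (braid_perm beta) i.+1 ->
  ~ biorderable (H_beta beta).
Proof.
move=> hn /andP[hi1 hi2] [x0 [hcard hfix]] [lt [Hcomp [Hirr [Htr [Htot [Hl Hr]]]]]].
have [K eK] : exists K, n = K.+2 by exists n.-2; lia.
subst n.
have hiK : i <= K.+1 by lia.
set D := Dw K i.
have ht0 : forall w : 'I_K.+2, nat_of_ord (braid_perm D w) = cyc i w by move=> w; exact: bp_Dw.
have [c hc] := conj_cycle hcard hfix ht0.
have [C hC] := realz_all c.
set s00 : word K.+2 := [:: sg K 0; sg K 0].
set X := winv C ++ D ++ C.
set Y := winv C ++ s00 ++ C.
have hbX : braid_perm X = braid_perm beta.
  by rewrite /X !braid_perm_cat braid_perm_winv hC mulgA.
have hbs : braid_perm s00 = 1%g.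
  exact: bp_ss.
have hX : H_beta beta X.
  apply: (@H_beq _ _ ((X ++ winv beta) ++ beta)); last first.
    apply: H_mul; last exact: H_gen.
    by apply: H_pure; rewrite /pure braid_perm_cat braid_perm_winv hbX mulgV.
  rewrite -catA -[X in beq _ X]cats0; apply: beq_catl; exact: beq_winvl.
have hY : H_beta beta Y.
  by apply: H_pure; rewrite /pure /Y !braid_perm_cat braid_perm_winv hbs mul1g hC mulVg.
have hcore : beq (pw D i.+1 ++ s00) (s00 ++ pw D i.+1).
  have h1 : beq ([:: sg K 0] ++ pw D i.+1) (pw D i.+1 ++ [:: sg K 0]).
    by apply: Dm_comm => //; lia.
  rewrite /s00.
  have -> : pw D i.+1 ++ [:: sg K 0; sg K 0] = (pw D i.+1 ++ [:: sg K 0]) ++ [:: sg K 0] by rewrite -catA.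
  apply: beq_trans (beq_catr _ (beq_sym h1)) _.
  have -> : ([:: sg K 0] ++ pw (Dw K i) i.+1) ++ [:: sg K 0] = [:: sg K 0] ++ (pw D i.+1 ++ [:: sg K 0]) by rewrite -catA.
  apply: beq_trans (beq_catl _ (beq_sym h1)) _.
  exact: beq_refl.
have hpX : beq (pw X i.+1) (winv C ++ pw D i.+1 ++ C).
  by have := pw_conj D (winv C) i.+1; rewrite winvK.
have hcomm : beq (pw X i.+1 ++ Y) (Y ++ pw X i.+1).
  apply: beq_trans (beq_catr _ hpX) _.
  apply: beq_trans (conj_cat _ _ _) _.
  apply: beq_trans (conj_beq _ hcore) _.
  apply: beq_trans (beq_sym (conj_cat _ _ _)) _.
  apply: beq_catl; exact: beq_sym.
have hxy := bo_comm Hcomp Hirr Htr Htot Hl Hr hX hY hcomm.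
have hDs : beq (D ++ s00) (s00 ++ D).
  apply: beq_trans (beq_sym (unconj C _)) _.
  apply: beq_trans (unconj C (s00 ++ D)).
  apply: beq_catl; apply: beq_catr.
  apply: beq_trans (beq_sym (conj_cat _ _ _)) _.
  apply: beq_trans hxy _.
  exact: conj_cat.
have [H1 _] := beq_inv (ord0 : 'I_K.+2) (inord 1) hDs.
have := H1 1%g.
rewrite !cnt_cat hbs mul1g cnt_11; set q := cnt _ _ 1 D.
rewrite /s00 !cnt_ss !perm1 !ht0 sg_val // inordK //.
have -> : hitN 0 (cyc i 0) (cyc i 1) = false.
  rewrite /cyc /hitN eqxx (_ : 1 <= i) //=; last lia.
  rewrite (_ : (i == 1) = false) ?andbF //; lia.
have -> : hitN 0 (@nat_of_ord K.+2 ord0) 1 = true by [].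
move=> h; have : (q + 0 = 2 + q)%Z by exact: h.
clear; lia.
Qed.
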